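(* For any vector field $X$ on $M$, $$\tau\big(\Phi(X), \nabla^{E'}_X\Phi'(X)\big) = -\tfrac{1}{2}D_M[X|XX],\qquad \tau\big(\Phi(X), \nabla^{E'}_X\nabla^{E'}_X\Phi'(X)\big) = -\tfrac{1}{2}D_M[X|XXX].$$
   Context: Let $\mathbb{R}^{2n+1}$ have coordinates $(\mathbf{x},\mathbf{p},z)$ and contact form $\theta=dz-\sum_ip_i\,dx_i$. A quasi-Hessian manifold $M$ is obtained by gluing Legendre submanifolds $L\subset\mathbb{R}^{2n+1}$ (local models) via affine Legendre equivalences. On each local model, $\pi^e:(\mathbf{x},\mathbf{p},z)\mapsto(\mathbf{x},z)$ and $\pi^m:(\mathbf{x},\mathbf{p},z)\mapsto(\mathbf{p},z')$ with $z'=\mathbf{p}^T\mathbf{x}-z$; $E=\{(q,w):dz(w)-\mathbf{p}(q)^Td\mathbf{x}(w)=0\}\subset L\times(\mathbb{R}^n_{\mathbf{x}}\times\mathbb{R}_z)$ with $\Phi=d\pi^e:TL\to E$ and flat connection $\nabla^E$ (flat frame $s_i=\partial/\partial x_i+p_i\,\partial/\partial z$), and analogously $E'$ with $\Phi'=d\pi^m$ and flat connection $\nabla^{E'}$ (flat frame $s_i^*=\partial/\partial p_i+x_i\,\partial/\partial z'$); these glue to bundles on $M$. $\tau=\sum_i dx_i\,dp_i$ (symmetrized), $\tau(s_i,s_j^* )=\tfrac12\delta_{ij}$, and $\tau(\eta,\zeta')$ means $\tau(\eta\oplus0,0\oplus\zeta')$. The canonical divergence on a local model is $D(p,q)=z(p)+z'(q)-\mathbf{x}(p)^T\mathbf{p}(q)$;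 it is invariant under affine Legendre equivalences and defines $D_M:M\times M\to\mathbb{R}$ (locally). For a function $\rho$ on $M\times M$, $\rho[X_1\cdots X_k|Y_1\cdots Y_l](r)=(X_1)_p\cdots(X_k)_p(Y_1)_q\cdots(Y_l)_q\,\rho(p,q)\big|_{p=q=r}$. *)

(* Defs.v *)
(* MathComp + MathComp-Analysis, over an abstract R : realType.
   Local-model (chart) formalization of a quasi-Hessian manifold. *)
From HB Require Import structures.
From mathcomp Require Import all_boot all_order all_algebra.
From mathcomp Require Import all_classical all_reals all_analysis.
Set Implicit Arguments. Unset Strict Implicit. Unset Printing Implicit Defensive.
Import Order.TTheory GRing.Theory Num.Theory.
Import numFieldNormedType.Exports.
Local Open Scope classical_set_scope.
Local Open Scope ring_scope.

Section QH.
Variables (R : realType) (n : nat).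

Definition vfield := 'rV[R]_n -> 'rV[R]_n.

Fixpoint Ck {V : normedModType R} (U : set 'rV[R]_n) (k : nat) (f : 'rV[R]_n -> V) : Prop :=
  match k with
  | 0 => {in U, continuous f}
  | k'.+1 => (forall u, U u -> differentiable f u) /\
             (forall v : 'rV[R]_n, Ck U k' (fun u => 'D_v f u))
  end.
Definition smooth_on {V : normedModType R} (U : set 'rV[R]_n) (f : 'rV[R]_n -> V) :=
  forall k, Ck U k f.

Definition vact {V : normedModType R} (X : vfield) (f : 'rV[R]_n -> V) : 'rV[R]_n -> V :=
  fun u => 'D_(X u) f u.

Definition dotv (a b : 'rV[R]_n) : R := \sum_(i < n) a ord0 i * b ord0 i.

(* A local model: a Legendre submanifold L of R^(2n+1), given by a parametrization
   u |-> (x u, p u, z u) of an open set U of R^n (smooth immersion, theta pulls back to 0). *)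
Definition legendre_param (U : set 'rV[R]_n) (x p : 'rV[R]_n -> 'rV[R]_n)
    (z : 'rV[R]_n -> R) : Prop :=
  [/\ open U, smooth_on U x /\ smooth_on U p, smooth_on U z,
      (forall u, U u -> forall v : 'rV[R]_n, v != 0 ->
          ('D_v x u != 0) \/ ('D_v p u != 0)) &
      (* Legendre: dz - sum_i p_i dx_i = 0 on L *)
      (forall u, U u -> forall v : 'rV[R]_n, 'D_v z u = dotv (p u) ('D_v x u))].

Definition zdual (x p : 'rV[R]_n -> 'rV[R]_n) (z : 'rV[R]_n -> R) : 'rV[R]_n -> R :=
  fun u => dotv (p u) (x u) - z u.

(* Fibres of E and E' are represented as vectors of R^n x R:
   an element (w, c) of E_u  (in R^n_x x R_z) satisfies c = p(u)^T w,
   an element (w, c) of E'_u (in R^n_p x R_z') satisfies c = x(u)^T w. *)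
Definition section := 'rV[R]_n -> 'rV[R]_n * R.

(* Phi = d pi^e, Phi' = d pi^m applied to X *)
Definition PhiX (X : vfield) x (z : 'rV[R]_n -> R) : section :=
  fun u => (vact X x u, vact X z u).
Definition Phi'X (X : vfield) x p z : section :=
  fun u => (vact X p u, vact X (zdual x p z) u).

(* flat connection of E' : flat frame s_i^star = d/dp_i + x_i d/dz'; an element (w,c) of E'
   has coordinates w in this frame, so nabla_X (sum_i a_i s_i^star) = sum_i X(a_i) s_i^star *)
Definition nablaE' (x : 'rV[R]_n -> 'rV[R]_n) (X : vfield) (s : section) : section :=
  fun u => let a := vact X (fun v => (s v).1) u in (a, dotv (x u) a).

(* tau(eta, zeta') = tau(eta + 0, 0 + zeta') with tau = sum_i dx_i dp_i (symmetrized) *)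
Definition tau (eta zeta' : 'rV[R]_n * R) : R := 2^-1 * dotv eta.1 zeta'.1.

Definition Dcan x p z : 'rV[R]_n -> 'rV[R]_n -> R :=
  fun u v => z u + zdual x p z v - dotv (x u) (p v).

Definition D_X_XX (X : vfield) (D : 'rV[R]_n -> 'rV[R]_n -> R) : 'rV[R]_n -> R :=
  fun r => vact X (fun a => vact X (vact X (D a)) r) r.
Definition D_X_XXX (X : vfield) (D : 'rV[R]_n -> 'rV[R]_n -> R) : 'rV[R]_n -> R :=
  fun r => vact X (fun a => vact X (vact X (vact X (D a))) r) r.

End QH.

(* Main.v *)
Require Import Defs.
From HB Require Import structures.
From mathcomp Require Import all_boot all_order all_algebra.
From mathcomp Require Import all_classical all_reals all_analysis.
Set Implicit Arguments. Unset Strict Implicit. Unset Printing Implicit Defensive.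
Import Order.TTheory GRing.Theory Num.Theory.
Import numFieldNormedType.Exports.
Local Open Scope classical_set_scope.
Local Open Scope ring_scope.
Section Scal.
Context {R : realType} {V : normedModType R}.
Lemma scale_is_bilinear :
  bilinear_for
    (GRing.Scale.Law.clone _ _ *:%R _) (GRing.Scale.Law.clone _ _ *:%R _)
    (@GRing.scale R V).
Proof.
split=> [u'|u] a x y /=.
- by rewrite scalerDl scalerA.
- by rewrite scalerDr !scalerA mulrC.
Qed.
HB.instance Definition _ := bilinear_isBilinear.Build R R V V _ _ (@GRing.scale R V)
  scale_is_bilinear.

Lemma differentiable_scalef {W : normedModType R} (a : W -> R) (f : W -> V) x :
  differentiable a x -> differentiable f x -> differentiable (fun y => a y *: f y) x.
Proof.
move=> da df.
have -> : (fun y => a y *: f y) = (fun p : R * V => p.1 *: p.2) \o (fun y => (a y, f y)) by [].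
apply: differentiable_comp; first exact: differentiable_pair.
apply: (differentiable_bilin (f := @GRing.scale R V)) => p.
exact: scale_continuous.
Qed.

Fact der_scalef {W : normedModType R} (f : W -> R) (g : W -> V) x v :
  derivable f x v -> derivable g x v ->
  (fun h => h^-1 *: (((fun y => f y *: g y) \o shift x) (h *: v) - f x *: g x)) @ 0^'
   --> f x *: 'D_v g x + 'D_v f x *: g x.
Proof.
move=> df dg.
set fg := fun h : R => f (h *: v + x) *: (h^-1 *: (g (h *: v + x) - g x))
   + (h^-1 *: (f (h *: v + x) - f x)) *: g x.
rewrite [X in X @ _](_ : _ = fg) /=; last first.
  rewrite funeqE => h /=.
  have -> : f (h *: v + x) *: g (h *: v + x) - f x *: g x =
    f (h *: v + x) *: (g (h *: v + x) - g x) + (f (h *: v + x) - f x) *: g x.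
    by rewrite scalerBr scalerBl addrA subrK.
  rewrite /fg scalerDr; congr (_ + _); first by rewrite !scalerA mulrC.
  by rewrite scalerA.
apply: cvgD; last exact: (cvgZr_tmp (a := g x) df).
apply: cvgZ; last exact: dg.
suff : {for 0, continuous (fun h : R => f(h *: v + x))}.
  by move=> /continuous_withinNx; rewrite scale0r add0r.
exact/differentiable_continuous/derivable1_diffP/(derivable1P _ _ _).1.
Qed.

Lemma derive_scalef {W : normedModType R} (f : W -> R) (g : W -> V) x v :
  derivable f x v -> derivable g x v ->
  'D_v (fun y => f y *: g y) x = f x *: 'D_v g x + 'D_v f x *: g x.
Proof. by move=> df dg; apply: cvg_lim (der_scalef df dg). Qed.
End Scal.
Section Loc.
Context {R : realType}.

Lemma near_eq_differentiable {V W : normedModType R} (f g : V -> W) u :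
  (\forall b \near u, f b = g b) -> differentiable f u -> differentiable g u.
Proof.
move=> fg df.
have h0 : \forall e \near (0:V), (g - f) (u + e) = 0.
  apply/(nbhs0P (fun b => (g - f) b = 0)).
  by near=> b; change (g b - f b = 0); rewrite (near fg b) // subrr.
have hu : (g - f) u = 0 by change (g u - f u = 0); rewrite (nbhs_singleton fg) subrr.
have Hl : (g - f) \o shift u = cst ((g - f) u) + (0 : V -> W) +o_ 0 id.
  apply/eqaddoP => e e0; near=> y.
  have H : (g - f) (u + y) = 0 by apply: (near h0 y).
  change (g (u+y) - f (u+y) = 0) in H.
  rewrite /= hu addr0 subr0.
  change (`|g (y + u) - f (y + u)| <= e * `|y|).
  by rewrite [y + u]addrC H normr0 mulr_ge0 // ltW.
have dd : ('d (g - f) u : V -> W) = 0.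
  apply/diff_unique; first exact: cst_continuous.
  exact: Hl.
have dh : differentiable (g - f) u.
  apply/diff_locallyP; rewrite dd; split => //; exact: cst_continuous.
have -> : g = f + (g - f) by rewrite addrC subrK.
exact: differentiableD.
Unshelve. all: by end_near. Qed.
End Loc.

Section CkS.
Variables (R : realType) (n : nat) (U : set 'rV[R]_n).
Hypothesis oU : open U.
Local Notation E := 'rV[R]_n.

Lemma nearU u : U u -> \forall b \near u, U b.
Proof. by move=> Uu; apply: open_nbhs_nbhs; split. Qed.

Lemma eqU_near {V : Type} (f g : E -> V) u :
  (forall b, U b -> f b = g b) -> U u -> \forall b \near u, f b = g b.
Proof. by move=> fg Uu; near=> b; apply: fg; near: b; exact: nearU. Unshelve. all: by end_near. Qed.

Lemma Ck_loc {V : normedModType R} k (f g : E -> V) :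
  (forall b, U b -> f b = g b) -> Ck U k f -> Ck U k g.
Proof.
elim: k f g => [|k IH] f g fg /=.
- move=> cf u uU; have Uu := set_mem uU.
  rewrite /continuous_at -(fg u Uu).
  apply: cvg_trans (cf u uU); exact: (near_eq_cvg (eqU_near fg Uu)).
- move=> [df dD]; split.
  + by move=> u Uu; apply: near_eq_differentiable (df u Uu); exact: eqU_near.
  + move=> v; apply: IH (dD v) => b Ub; apply: near_eq_derive; exact: eqU_near.
Qed.

Lemma Ck_S {V : normedModType R} k (f : E -> V) : Ck U k.+1 f -> Ck U k f.
Proof.
elim: k f => [|k IH] f /=.
- by move=> [df _] u uU; apply: differentiable_continuous; apply: df; exact: set_mem.
- by move=> [df dD]; split => // v; exact: IH (dD v).
Qed.

Lemma Ck_cst {V : normedModType R} k (c : V) : Ck U k (fun _ => c).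
Proof.
elim: k c => [|k IH] c /=.
- by move=> u _; exact: cst_continuous.
- split; first by move=> u _; exact: differentiable_cst.
  move=> v; have -> : 'D_v (fun _ : E => c) = fun _ => 0.
    by apply/funext => u; exact: derive_cst.
  exact: IH.
Qed.

Lemma Ck_add {V : normedModType R} k (f g : E -> V) :
  Ck U k f -> Ck U k g -> Ck U k (fun u => f u + g u).
Proof.
elim: k f g => [|k IH] f g /=.
- by move=> cf cg u uU; exact: continuousD (cf u uU) (cg u uU).
- move=> [df dDf] [dg dDg]; split.
  + by move=> u Uu; exact: differentiableD (df u Uu) (dg u Uu).
  + move=> v; apply: (@Ck_loc _ _ (fun u => 'D_v f u + 'D_v g u)); last exact: IH.
    by move=> b Ub; rewrite -deriveD //; apply: diff_derivable; by [apply: df | apply: dg].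
Qed.

Lemma Ck_scale {V : normedModType R} k (a : E -> R) (f : E -> V) :
  Ck U k a -> Ck U k f -> Ck U k (fun u => a u *: f u).
Proof.
elim: k a f => [|k IH] a f /=.
- by move=> ca cf u uU; exact: continuousZ (ca u uU) (cf u uU).
- move=> [da dDa] [df dDf]; split.
  + by move=> u Uu; exact: differentiable_scalef (da u Uu) (df u Uu).
  + move=> v; apply: (@Ck_loc _ _ (fun u => a u *: 'D_v f u + 'D_v a u *: f u)).
      by move=> b Ub; rewrite derive_scalef //; apply: diff_derivable; by [apply: df | apply: da].
    apply: Ck_add; first exact: IH (Ck_S (conj da dDa)) (dDf v).
    exact: IH (dDa v) (Ck_S (conj df dDf)).
Qed.

Lemma Ck_sum {V : normedModType R} k (I : eqType) (s : seq I) (F : I -> E -> V) :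
  (forall i, Ck U k (F i)) -> Ck U k (fun u => \sum_(i <- s) F i u).
Proof.
move=> hF; elim: s => [|i s IH].
  have -> : (fun u => \sum_(i <- [::]) F i u) = fun _ => 0.
    by apply/funext => u; rewrite big_nil.
  exact: Ck_cst.
have -> : (fun u => \sum_(j <- i :: s) F j u) = fun u => F i u + \sum_(j <- s) F j u.
  by apply/funext => u; rewrite big_cons.
exact: Ck_add.
Qed.

Lemma derive_coord p q (g : E -> 'M[R]_(p, q)) i j u v :
  derivable g u v -> 'D_v (fun b => g b i j) u = 'D_v g u i j.
Proof.
move=> dg; apply: cvg_lim => //.
have H := cvg_comp _ _ dg (@coord_continuous R p q i j ('D_v g u)).
apply: cvg_trans H; apply: near_eq_cvg; near=> h.
by rewrite /= !mxE.
Unshelve. all: by end_near. Qed.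

Lemma Ck_coord p q k (g : E -> 'M[R]_(p, q)) i j :
  Ck U k g -> Ck U k (fun u => g u i j).
Proof.
elim: k g => [|k IH] g /=.
- move=> cg u uU; apply: (continuous_comp (f := g) (g := fun M : 'M[R]_(p, q) => M i j)).
    exact: cg.
  exact: coord_continuous.
- move=> [dg dD]; split.
  + move=> u Uu; apply: (differentiable_comp (f := g) (g := fun M : 'M[R]_(p, q) => M i j)).
      exact: dg.
    exact: differentiable_coord.
  + move=> v; apply: (@Ck_loc _ _ (fun u => 'D_v g u i j)); last exact: IH.
    by move=> b Ub; rewrite derive_coord //; apply: diff_derivable; apply: dg.
Qed.

Lemma Ck_dotv k (f g : E -> E) :
  Ck U k f -> Ck U k g -> Ck U k (fun u => dotv (f u) (g u)).
Proof.
move=> hf hg; rewrite /dotv; apply: Ck_sum => i.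
exact: (Ck_scale (Ck_coord 0 i hf) (Ck_coord 0 i hg)).
Qed.


Lemma Ck_opp {V : normedModType R} k (f : E -> V) : Ck U k f -> Ck U k (fun u => - f u).
Proof.
move=> hf; apply: (@Ck_loc _ _ (fun u => (fun _ => -1 : R) u *: f u)).
  by move=> b _; rewrite scaleN1r.
exact: Ck_scale (Ck_cst _ _) hf.
Qed.

Lemma vact_loc {V : normedModType R} (X : vfield R n) (F G : E -> V) u :
  (forall b, U b -> F b = G b) -> U u -> vact X F u = vact X G u.
Proof. by move=> FG Uu; rewrite /vact; apply: near_eq_derive; exact: eqU_near. Qed.

End CkS.

Section Pt.
Variables (R : realType) (n : nat).
Local Notation E := 'rV[R]_n.

Lemma differentiable_coordf p q (g : E -> 'M[R]_(p, q)) i j u :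
  differentiable g u -> differentiable (fun b => g b i j) u.
Proof.
move=> dg; apply: (differentiable_comp (f := g) (g := fun M : 'M[R]_(p, q) => M i j)) => //.
exact: differentiable_coord.
Qed.

Lemma dotv_sumE (c : E) (g : E -> E) :
  (fun b => dotv c (g b)) = \sum_(i < n) (fun b => c 0 i *: g b 0 i).
Proof. by rewrite fct_sumE. Qed.

Lemma differentiable_dotvl (c : E) (g : E -> E) u :
  differentiable g u -> differentiable (fun b => dotv c (g b)) u.
Proof.
move=> dg; rewrite dotv_sumE; apply: differentiable_sum => i.
apply: (differentiable_scalef (a := fun _ => c 0 i) (f := fun b => g b 0 i)).
  exact: differentiable_cst.
exact: differentiable_coordf.
Qed.

Lemma derive_dotvl (c : E) (g : E -> E) u v :
  differentiable g u -> 'D_v (fun b => dotv c (g b)) u = dotv c ('D_v g u).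
Proof.
move=> dg; rewrite dotv_sumE derive_sum; last first.
  move=> i; apply: diff_derivable.
  apply: (differentiable_scalef (a := fun _ => c 0 i) (f := fun b => g b 0 i)).
    exact: differentiable_cst.
  exact: differentiable_coordf.
rewrite /dotv; apply: eq_bigr => i _.
rewrite (derive_scalef (f := fun _ => c 0 i) (g := fun b => g b 0 i)).
- rewrite derive_cst scale0r addr0 derive_coord //; exact: diff_derivable.
- exact: derivable_cst.
- exact/diff_derivable/differentiable_coordf.
Qed.

Lemma dotvC (a b : E) : dotv a b = dotv b a.
Proof. by rewrite /dotv; apply: eq_bigr => i _; rewrite mulrC. Qed.

Lemma vact_cst {V : normedModType R} (X : vfield R n) (c : V) u : vact X (fun _ => c) u = 0.
Proof. exact: derive_cst. Qed.

Lemma vact_comb (X : vfield R n) (k : R) (f : E -> R) (c : E) (g : E -> E) u :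
  differentiable f u -> differentiable g u ->
  vact X (fun b => k + f b - dotv c (g b)) u = vact X f u - dotv c (vact X g u).
Proof.
move=> df dg; rewrite /vact.
have -> : (fun b => k + f b - dotv c (g b)) = (cst k + f) - (fun b => dotv c (g b)) by [].
rewrite deriveB; last 2 first.
- apply: derivableD; [exact: derivable_cst | exact: diff_derivable].
- exact/diff_derivable/differentiable_dotvl.
rewrite deriveD; last 2 first.
- exact: derivable_cst.
- exact: diff_derivable.
by rewrite derive_cst add0r derive_dotvl.
Qed.

Lemma vact_sum {V : normedModType R} (X : vfield R n) (f : E -> V) u :
  differentiable f u ->
  vact X f u = \sum_(i < n) X u 0 i *: 'D_(delta_mx 0 i) f u.
Proof.
move=> df; rewrite /vact deriveE // {1}(row_sum_delta (X u)) linear_sum.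
by apply: eq_bigr => i _; rewrite linearZ /= deriveE.
Qed.
End Pt.

Lemma smooth_vact (R : realType) (n : nat) (U : set 'rV[R]_n) (oU : open U)
   {V : normedModType R} (X : vfield R n) (f : 'rV[R]_n -> V) :
  smooth_on U X -> smooth_on U f -> smooth_on U (vact X f).
Proof.
move=> hX hf k.
apply: (@Ck_loc R n U oU V k
   (fun u => \sum_(i < n) X u 0 i *: 'D_(delta_mx 0 i) f u)).
  by move=> b Ub; rewrite vact_sum //; have [df _] := hf 1%N; exact: df.
apply: (Ck_sum oU) => i; apply: (Ck_scale oU); first exact: (Ck_coord oU 0 i (hX k)).
by have [_ dD] := hf k.+1; exact: dD.
Qed.

Theorem corollary4p3 (R : realType) (n : nat) (U : set 'rV[R]_n)
    (x p : 'rV[R]_n -> 'rV[R]_n) (z : 'rV[R]_n -> R) (X : vfield R n) :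
  legendre_param U x p z -> smooth_on U X ->
  forall r, U r ->
    tau (PhiX X x z r) (nablaE' x X (Phi'X X x p z) r)
      = - 2^-1 * D_X_XX X (Dcan x p z) r /\
    tau (PhiX X x z r) (nablaE' x X (nablaE' x X (Phi'X X x p z)) r)
      = - 2^-1 * D_X_XXX X (Dcan x p z) r.
Proof.
move=> [oU [sx sp] sz _ _] sX r Ur.
have dfU : forall (V : normedModType R) (f : 'rV[R]_n -> V), smooth_on U f ->
    forall u, U u -> differentiable f u.
  by move=> V f hf u Uu; have [df _] := hf 1%N; exact: df.
set zd := zdual x p z.
have szd : smooth_on U zd.
  move=> k; rewrite /zd /zdual.
  exact: (Ck_add oU (Ck_dotv oU (sp k) (sx k)) (Ck_opp oU (sz k))).
set P1 := vact X p; set P2 := vact X P1; set P3 := vact X P2.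
set Z1 := vact X zd; set Z2 := vact X Z1; set Z3 := vact X Z2.
have sP1 : smooth_on U P1 by exact: (smooth_vact oU sX sp).
have sP2 : smooth_on U P2 by exact: (smooth_vact oU sX sP1).
have sZ1 : smooth_on U Z1 by exact: (smooth_vact oU sX szd).
have sZ2 : smooth_on U Z2 by exact: (smooth_vact oU sX sZ1).
have st1 : forall a b, U b -> vact X (Dcan x p z a) b = Z1 b - dotv (x a) (P1 b).
  move=> a b Ub; rewrite /Dcan; apply: vact_comb; exact: dfU.
have st2 : forall a b, U b -> vact X (vact X (Dcan x p z a)) b = Z2 b - dotv (x a) (P2 b).
  move=> a b Ub.
  rewrite (@vact_loc R n U oU R X _ (fun b => 0 + Z1 b - dotv (x a) (P1 b))) //.
    apply: vact_comb; exact: dfU.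
  by move=> c Uc; rewrite add0r st1.
have st3 : forall a, vact X (vact X (vact X (Dcan x p z a))) r = Z3 r - dotv (x a) (P3 r).
  move=> a.
  rewrite (@vact_loc R n U oU R X _ (fun b => 0 + Z2 b - dotv (x a) (P2 b))) //.
    apply: vact_comb; exact: dfU.
  by move=> c Uc; rewrite add0r st2.
split.
- rewrite /D_X_XX.
  have -> : (fun a => vact X (vact X (Dcan x p z a)) r)
      = fun a => Z2 r + (fun _ => 0 : R) a - dotv (P2 r) (x a).
    by apply/funext => a; rewrite st2 // addr0 dotvC.
  rewrite vact_comb; last 2 first.
  + exact: differentiable_cst.
  + exact: dfU.
  rewrite vact_cst /tau /= sub0r mulrN mulNr opprK dotvC.
  done.
- rewrite /D_X_XXX.
  have -> : (fun a => vact X (vact X (vact X (Dcan x p z a))) r)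
      = fun a => Z3 r + (fun _ => 0 : R) a - dotv (P3 r) (x a).
    by apply/funext => a; rewrite st3 addr0 dotvC.
  rewrite vact_comb; last 2 first.
  + exact: differentiable_cst.
  + exact: dfU.
  rewrite vact_cst /tau /= sub0r mulrN mulNr opprK dotvC.
  done.
Qed.
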